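(* Let $\mathbf d\in\mathbb Z^n$ with $m=d_1+\dots+d_n$ and $\gcd(m,n)=1$. Then $y^{\mathbf d}s_1\cdots s_{n-1}$ is conjugate in $\widetilde{S_n}$ to $\pi^m$, and $\pi^m$ is an element of minimal length in this conjugacy class.
   Context: $\widetilde{S_n}$ is identified with the group of bijections $v:\mathbb Z\to\mathbb Z$ with $v(m+n)=v(m)+n$; $s_i$ ($i\in\mathbb Z/n$) swaps $i$ and $i+1$ (periodically extended), $\pi(m)=m+1$, $y_i(m)=m+n$ if $m\equiv i\bmod n$ and $y_i(m)=m$ otherwise ($1\le i\le n$); $y^{\mathbf d}=y_1^{d_1}\cdots y_n^{d_n}$. $\widehat{S_n}$ is the Coxeter group generated by $s_0,\dots,s_{n-1}$; every $v\in\widetilde{S_n}$ is uniquely $\pi^k\alpha$ with $\alpha\in\widehat{S_n}$, and the length is $\ell(v):=\ell(\alpha)$ (Coxeter length), so $\ell(\pi^k)=0$. *)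

(* Defs.v *)
From Stdlib Require Import ZArith List Lia.
Open Scope Z_scope.

(* An element of the extended affine symmetric group: a bijection v : Z -> Z
   with v (x + n) = v x + n. *)
Definition is_affperm (n : nat) (v : Z -> Z) : Prop :=
  (exists h : Z -> Z, (forall x, h (v x) = x) /\ (forall x, v (h x) = x)) /\
  (forall x, v (x + Z.of_nat n) = v x + Z.of_nat n).

(* Product in the group = composition; u * v = u o v. Equality is pointwise. *)
Definition feq (u v : Z -> Z) : Prop := forall x, u x = v x.

Definition aff_conj (n : nat) (u v : Z -> Z) : Prop :=
  exists g : Z -> Z, is_affperm n g /\ forall x, g (u x) = v (g x).

(* s_i (i in Z/n) swaps i and i+1, periodically extended.  For n = 1 there is
   no such transposition and the Coxeter group is trivial: s_i = id. *)
Definition s (n : nat) (i : Z) (x : Z) : Z :=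
  let N := Z.of_nat n in
  if (2 <=? N) then
    if (x mod N =? i mod N) then x + 1
    else if (x mod N =? (i + 1) mod N) then x - 1
    else x
  else x.

Definition pi (x : Z) : Z := x + 1.
Definition pi_pow (k : Z) (x : Z) : Z := x + k.

Definition y (n : nat) (i : Z) (x : Z) : Z :=
  if (x mod Z.of_nat n =? i mod Z.of_nat n) then x + Z.of_nat n else x.
Definition y_inv (n : nat) (i : Z) (x : Z) : Z :=
  if (x mod Z.of_nat n =? i mod Z.of_nat n) then x - Z.of_nat n else x.

Definition y_pow (n : nat) (i : Z) (k : Z) : Z -> Z :=
  if (0 <=? k) then Nat.iter (Z.to_nat k) (fun f x => y n i (f x)) (fun x => x)
  else Nat.iter (Z.to_nat (- k)) (fun f x => y_inv n i (f x)) (fun x => x).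

Definition prod_list (l : list (Z -> Z)) : Z -> Z :=
  fold_right (fun f g x => f (g x)) (fun x => x) l.

Definition y_mon (n : nat) (d : nat -> Z) : Z -> Z :=
  prod_list (map (fun i => y_pow n (Z.of_nat i) (d i)) (seq 1 n)).

Definition coxeter_elt (n : nat) : Z -> Z :=
  prod_list (map (fun i => s n (Z.of_nat i)) (seq 1 (n - 1))).

Definition expressible (n : nat) (v : Z -> Z) (r : nat) : Prop :=
  exists (k : Z) (w : list nat),
    length w = r /\ Forall (fun i => (i < n)%nat) w /\
    feq v (fun x => pi_pow k (prod_list (map (fun i => s n (Z.of_nat i)) w) x)).

(* l is the length of v: v = pi^k alpha with alpha in the Coxeter group, and l
   is the Coxeter length of alpha (minimal number of simple reflections). *)
Definition length_is (n : nat) (v : Z -> Z) (l : nat) : Prop :=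
  expressible n v l /\ forall r, expressible n v r -> (l <= r)%nat.

(* Main.v *)
Require Import Defs.
From Stdlib Require Import ZArith List Lia.
Open Scope Z_scope.

Definition rho (n : nat) (x : Z) : Z := (x - 1) mod Z.of_nat n + 1.

Section R.
Variable n : nat.
Hypothesis Hn : (1 <= n)%nat.
Let N := Z.of_nat n.

Lemma rho_range x : 1 <= rho n x <= N.
Proof. unfold rho. pose proof (Z.mod_pos_bound (x-1) N). unfold N in *. lia. Qed.

Lemma rho_decomp x : x = rho n x + N * ((x-1)/N).
Proof. unfold rho. pose proof (Z.div_mod (x-1) N). unfold N in *. lia. Qed.

Lemma rho_shift a K : rho n (a + N*K) = rho n a.
Proof. unfold rho. replace (a + N*K - 1) with ((a-1) + K*N) by ring.
  fold N. rewrite Z_mod_plus_full. reflexivity. Qed.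

Lemma rho_small r : 1 <= r <= N -> rho n r = r.
Proof. intros. unfold rho. fold N. rewrite Z.mod_small; lia. Qed.

Lemma rho_mod x : x mod N = rho n x mod N.
Proof. rewrite (rho_decomp x) at 1. rewrite Z.mul_comm, Z_mod_plus_full. reflexivity. Qed.

Lemma modeqb a b : 1 <= a <= N -> 1 <= b <= N -> (a mod N =? b mod N) = (a =? b).
Proof.
  intros Ha Hb.
  destruct (Z.eq_dec a N); destruct (Z.eq_dec b N); subst;
  repeat first [rewrite Z.mod_same by lia | rewrite (Z.mod_small a) by lia | rewrite (Z.mod_small b) by lia];
  destruct (Z.eqb_spec 0 0); destruct (Z.eqb_spec N N); try lia;
  repeat match goal with |- context [?x =? ?y] => destruct (Z.eqb_spec x y) end; lia.
Qed.
End R.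

Ltac bsplit := repeat match goal with
  | |- context [if ?c then _ else _] => destruct c eqn:?
  end; rewrite ?Bool.andb_true_iff, ?Bool.andb_false_iff, ?Z.eqb_eq, ?Z.eqb_neq,
       ?Z.leb_le, ?Z.leb_gt, ?Z.ltb_lt, ?Z.ltb_ge in *.

Lemma s_val n i x : 2 <= Z.of_nat n -> 1 <= i <= Z.of_nat n - 1 -> 1 <= x <= Z.of_nat n ->
  s n i x = if x =? i then x+1 else if x =? i+1 then x - 1 else x.
Proof.
  intros H2 Hi Hx. unfold s. cbv zeta.
  replace (2 <=? Z.of_nat n) with true by (symmetry; apply Z.leb_le; lia).
  rewrite (modeqb n) by lia. rewrite (modeqb n) by lia. reflexivity.
Qed.

Lemma s_per n i x : (1 <= n)%nat -> s n i (x + Z.of_nat n) = s n i x + Z.of_nat n.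
Proof.
  intros Hn. unfold s. cbv zeta.
  replace ((x + Z.of_nat n) mod Z.of_nat n) with (x mod Z.of_nat n)
    by (replace (x + Z.of_nat n) with (x + 1 * Z.of_nat n) by ring; rewrite Z_mod_plus_full; reflexivity).
  bsplit; lia.
Qed.

Lemma prod_per n (l : list (Z -> Z)) :
  Forall (fun f => forall x, f (x + Z.of_nat n) = f x + Z.of_nat n) l ->
  forall x, prod_list l (x + Z.of_nat n) = prod_list l x + Z.of_nat n.
Proof.
  induction 1; intros; simpl; auto. rewrite IHForall. apply H.
Qed.

Lemma per_mult n (f : Z -> Z) : (forall x, f (x + Z.of_nat n) = f x + Z.of_nat n) ->
  forall x k, f (x + Z.of_nat n * k) = f x + Z.of_nat n * k.
Proof.
  intros H.
  assert (Hp : forall x p, f (x + Z.of_nat n * Z.of_nat p) = f x + Z.of_nat n * Z.of_nat p).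
  { intros x p; induction p. simpl. rewrite !Z.mul_0_r, !Z.add_0_r. reflexivity.
    rewrite Nat2Z.inj_succ. replace (x + Z.of_nat n * Z.succ (Z.of_nat p)) with
      ((x + Z.of_nat n * Z.of_nat p) + Z.of_nat n) by ring. rewrite H, IHp. ring. }
  intros x k. destruct (Z_le_gt_dec 0 k).
  - rewrite <- (Z2Nat.id k) by lia. apply Hp.
  - pose proof (Hp (x + Z.of_nat n * k) (Z.to_nat (-k))).
    rewrite Z2Nat.id in H0 by lia.
    replace (x + Z.of_nat n * k + Z.of_nat n * - k) with x in H0 by ring. lia.
Qed.

Lemma cox_prod n : (2 <= n)%nat -> forall len a, (1 <= a)%nat -> (a + len <= n)%nat ->
  forall x, 1 <= x <= Z.of_nat n ->
  prod_list (map (fun i => s n (Z.of_nat i)) (seq a len)) x =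
  if ((Z.of_nat a <=? x) && (x <? Z.of_nat (a+len)))%bool then x+1
  else if x =? Z.of_nat (a+len) then Z.of_nat a else x.
Proof.
  intros H2. induction len; intros a Ha Hal x Hx.
  - simpl. rewrite Nat.add_0_r. bsplit; lia.
  - cbn [seq map prod_list fold_right]. fold (prod_list (map (fun i => s n (Z.of_nat i)) (seq (S a) len))).
    rewrite IHlen by lia.
    bsplit; rewrite s_val by lia; bsplit; lia.
Qed.

Lemma cox_per n : (1 <= n)%nat -> forall x, coxeter_elt n (x + Z.of_nat n) = coxeter_elt n x + Z.of_nat n.
Proof.
  intros Hn. unfold coxeter_elt. apply prod_per. apply Forall_forall.
  intros f Hf. apply in_map_iff in Hf. destruct Hf as [i [<- _]]. intros; apply s_per; auto.
Qed.

Lemma cox_val n : (1 <= n)%nat -> forall x,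
  coxeter_elt n x = x + 1 - Z.of_nat n * (if rho n x =? Z.of_nat n then 1 else 0).
Proof.
  intros Hn x.
  assert (Hr := rho_range n Hn x).
  destruct (Nat.eq_dec n 1) as [E|E].
  - subst. unfold coxeter_elt. simpl. replace (rho 1 x) with 1 by (simpl in Hr; lia). simpl. lia.
  - rewrite (rho_decomp n Hn x) at 1. rewrite (per_mult n _ (cox_per n Hn)).
    unfold coxeter_elt. rewrite cox_prod by lia.
    replace (1 + (n-1))%nat with n by lia.
    pose proof (rho_decomp n Hn x).
    bsplit; lia.
Qed.

Lemma ypow_nat n i p z : (1 <= n)%nat ->
  Nat.iter p (fun f x => y n i (f x)) (fun x => x) z =
  if z mod Z.of_nat n =? i mod Z.of_nat n then z + Z.of_nat n * Z.of_nat p else z.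
Proof.
  intros Hn. induction p.
  - simpl. bsplit; lia.
  - simpl Nat.iter. rewrite IHp. unfold y.
    destruct (z mod Z.of_nat n =? i mod Z.of_nat n) eqn:E.
    + rewrite Z.mul_comm, Z_mod_plus_full, E. lia.
    + rewrite E. reflexivity.
Qed.

Lemma yinv_nat n i p z : (1 <= n)%nat ->
  Nat.iter p (fun f x => y_inv n i (f x)) (fun x => x) z =
  if z mod Z.of_nat n =? i mod Z.of_nat n then z - Z.of_nat n * Z.of_nat p else z.
Proof.
  intros Hn. induction p.
  - simpl. bsplit; lia.
  - simpl Nat.iter. rewrite IHp. unfold y_inv.
    destruct (z mod Z.of_nat n =? i mod Z.of_nat n) eqn:E.
    + replace (z - Z.of_nat n * Z.of_nat p) with (z + (- Z.of_nat p) * Z.of_nat n) by ring.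
      rewrite Z_mod_plus_full, E. lia.
    + rewrite E. reflexivity.
Qed.

Lemma ypow_val n i k z : (1 <= n)%nat ->
  y_pow n i k z = if z mod Z.of_nat n =? i mod Z.of_nat n then z + Z.of_nat n * k else z.
Proof.
  intros Hn. unfold y_pow. destruct (0 <=? k) eqn:E.
  - rewrite ypow_nat by auto. rewrite Z2Nat.id by lia. reflexivity.
  - rewrite yinv_nat by auto. rewrite Z2Nat.id by lia. bsplit; lia.
Qed.

Lemma ymon_gen n (d : nat -> Z) : (1 <= n)%nat -> forall l z,
  prod_list (map (fun i => y_pow n (Z.of_nat i) (d i)) l) z =
  z + Z.of_nat n * fold_right Z.add 0 (map (fun i => if z mod Z.of_nat n =? Z.of_nat i mod Z.of_nat n then d i else 0) l).
Proof.
  intros Hn. induction l; intros z.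
  - simpl. ring.
  - cbn [map prod_list fold_right]. fold (prod_list (map (fun i => y_pow n (Z.of_nat i) (d i)) l)).
    rewrite IHl, ypow_val by auto.
    set (T := fold_right _ _ _).
    replace (z + Z.of_nat n * T) with (z + T * Z.of_nat n) by ring.
    rewrite Z_mod_plus_full. bsplit; lia.
Qed.

Lemma ind_sum n (d : nat -> Z) : (1 <= n)%nat -> forall r, 1 <= r <= Z.of_nat n ->
  forall len a, (1 <= a)%nat -> (a + len <= n + 1)%nat ->
  fold_right Z.add 0 (map (fun i => if r mod Z.of_nat n =? Z.of_nat i mod Z.of_nat n then d i else 0) (seq a len))
  = if ((Z.of_nat a <=? r) && (r <? Z.of_nat (a + len)))%bool then d (Z.to_nat r) else 0.
Proof.
  intros Hn r Hr. induction len; intros a Ha Hal.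
  - simpl. bsplit; lia.
  - cbn [seq map fold_right]. rewrite IHlen by lia.
    rewrite (modeqb n) by lia.
    destruct (Z.eqb_spec r (Z.of_nat a)).
    + subst. rewrite Nat2Z.id. bsplit; lia.
    + bsplit; lia.
Qed.

Lemma ymon_val n d : (1 <= n)%nat -> forall z,
  y_mon n d z = z + Z.of_nat n * d (Z.to_nat (rho n z)).
Proof.
  intros Hn z. unfold y_mon. rewrite ymon_gen by auto.
  rewrite (rho_mod n Hn z). pose proof (rho_range n Hn z).
  rewrite ind_sum by lia. bsplit; lia.
Qed.

Lemma fold_add_init (l : list Z) b : fold_right Z.add b l = fold_right Z.add 0 l + b.
Proof. induction l; simpl; lia. Qed.

Lemma S_succ (d : nat -> Z) k :
  fold_right Z.add 0 (map d (seq 1 (S k))) = fold_right Z.add 0 (map d (seq 1 k)) + d (S k).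
Proof.
  rewrite seq_S, map_app, fold_right_app. simpl. rewrite fold_add_init. lia.
Qed.

Theorem corollary3p4 (n : nat) (d : nat -> Z) :
  (1 <= n)%nat ->
  let m := fold_right Z.add 0 (map d (seq 1 n)) in
  Z.gcd m (Z.of_nat n) = 1 ->
  aff_conj n (fun x => y_mon n d (coxeter_elt n x)) (pi_pow m) /\
  exists lp : nat, length_is n (pi_pow m) lp /\
    forall w : Z -> Z, aff_conj n w (pi_pow m) ->
      forall lw : nat, length_is n w lw -> (lp <= lw)%nat.
Proof.
  intros Hn m Hg. split.
  2:{ exists 0%nat. split; [split|].
      - exists m, nil. split; [reflexivity|]. split; [constructor|]. intro x. reflexivity.
      - intros; lia.
      - intros; lia. }
  set (N := Z.of_nat n).
  set (S := fun r : Z => fold_right Z.add 0 (map d (seq 1 (Z.to_nat r)))).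
  set (g := fun x => x - rho n x + rho n x * m - N * S (rho n x)).
  destruct (Z.gcd_bezout _ _ _ Hg) as [u [t Hut]].
  set (h := fun z => z + rho n (z*u) - rho n (z*u) * m + N * S (rho n (z*u))).
  exists g. split; [split|].
  - exists h. split.
    + intro x. unfold g, h.
      set (r := rho n x).
      pose proof (rho_decomp n Hn x) as Dx. fold r N in Dx.
      set (q := (x-1)/N) in Dx.
      replace ((x - r + r * m - N * S r) * u) with (r + N * (q*u - r*t - S r * u))
        by (fold N in Hut;
            assert (H0 : (x - r + r * m - N * S r) * u - (r + N * (q*u - r*t - S r * u)) = r * (u*m + t*N - 1))
              by (rewrite Dx at 1; ring);
            rewrite Hut in H0; lia).
      rewrite (rho_shift n). rewrite (rho_small n Hn) by apply (rho_range n Hn). ring.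
    + intro z. unfold g, h.
      set (r := rho n (z*u)).
      pose proof (rho_decomp n Hn (z*u)) as Dz. fold r N in Dz.
      set (q := (z*u-1)/N) in Dz.
      assert (E : z + r - r * m + N * S r = r + N * (q*m + z*t + S r)).
      { replace z with (z * (u*m + t*N)) at 1 by (fold N in Hut; rewrite Hut; ring).
        replace (z * (u*m + t*N)) with ((z*u)*m + z*t*N) by ring. rewrite Dz at 1. ring. }
      rewrite E, (rho_shift n), (rho_small n Hn) by (apply (rho_range n Hn)). rewrite <- E. ring.
  - intro x. unfold g. replace (x + Z.of_nat n) with (x + N * 1) by (unfold N; ring).
    rewrite (rho_shift n). unfold N. ring.
  - intro x. unfold pi_pow, g.
    rewrite ymon_val, cox_val by auto. fold N.
    set (b := if rho n x =? N then 1 else 0).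
    replace (x + 1 - N * b) with ((x+1) + N * (-b)) by ring.
    rewrite (rho_shift n).
    replace (x + 1 + N * - b + N * d (Z.to_nat (rho n (x + 1)))) with
      ((x + 1) + N * (d (Z.to_nat (rho n (x + 1))) - b)) by ring.
    rewrite (rho_shift n).
    pose proof (rho_decomp n Hn x) as Dx. fold N in Dx.
    set (q := (x-1)/N) in Dx.
    pose proof (rho_range n Hn x) as Rx. fold N in Rx.
    unfold b; clear b.
    destruct (Z.eqb_spec (rho n x) N) as [E|E].
    + assert (R1 : rho n (x+1) = 1).
      { rewrite Dx, E. replace (N + N*q + 1) with (1 + N*(q+1)) by ring.
        rewrite (rho_shift n). apply (rho_small n Hn); lia. }
      rewrite R1, E. unfold S. change (Z.to_nat 1) with 1%nat. unfold N. rewrite Nat2Z.id. fold m.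
      cbn [seq map fold_right]. ring.
    + assert (R1 : rho n (x+1) = rho n x + 1).
      { rewrite Dx at 1. replace (rho n x + N*q + 1) with ((rho n x + 1) + N*q) by ring.
        rewrite (rho_shift n). apply (rho_small n Hn); lia. }
      rewrite R1. unfold S. rewrite Z2Nat.inj_add by lia. rewrite Nat.add_1_r.
      rewrite S_succ. ring.
Qed.
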